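(* Let $\langle A, \leq, \otimes, \ominus, \mathbf{1}\rangle$ be a residuated partially ordered monoid with bottom element $\bot$. Let $Lex_\omega(A) = I(A)^\omega \cup I(A)^\ast A \{\bot\}^\omega$, with componentwise operation $\otimes^\omega$, identity $\mathbf{1}^\omega$, and order $a \leq_\omega b$ iff $a_{\leq k} \leq_k b_{\leq k}$ for all $k\geq1$. Then $\langle Lex_\omega(A), \leq_\omega, \otimes^\omega, \ominus_\omega, \mathbf{1}^\omega\rangle$ is a residuated partially ordered monoid, where for $a,b\in Lex_\omega(A)$: $$a \ominus_\omega b = \begin{cases} (a_1 \ominus b_1) \ldots (a_k \ominus b_k) \ldots & \text{if } \infty = \gamma(a,b) = \delta(a,b),\\ (a_1 \ominus b_1) \ldots (a_{\gamma(a,b)} \ominus b_{\gamma(a,b)})\,\bot^\omega & \text{if } \infty \neq \gamma(a,b) \leq \delta(a,b),\\ (a_1 \ominus b_1) \ldots (a_{\delta(a,b)} \ominus b_{\delta(a,b)})\,\big(\bigvee Lex_\omega(A)\big) & \text{otherwise.}\end{cases}$$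
   Context: A residuated partially ordered monoid $\langle A, \leq, \otimes, \ominus, \mathbf{1}\rangle$ consists of a partial order $\langle A,\leq\rangle$, a commutative monoid $\langle A,\otimes,\mathbf{1}\rangle$, and a binary operation $\ominus$ with $b \otimes c \leq a$ iff $c \leq a \ominus b$ for all $a,b,c\in A$. $a<b$ means $a\leq b$, $a\neq b$. $I(A) = \{c \in A \mid \forall a,b \in A.\ a \otimes c = b \otimes c \Rightarrow a = b\}$, $C(A)=A\setminus I(A)$. $I(A)^\omega$: infinite sequences over $I(A)$; $I(A)^\ast A\{\bot\}^\omega$: infinite sequences consisting of a finite (possibly empty) sequence over $I(A)$, then one element of $A$, then infinitely many $\bot$. $a_{\leq k}$ is the length-$k$ prefix $a_1\ldots a_k$. The order $\leq_k$ on $A^k$: $\leq_1=\leq$, and for $k\geq2$, $a_1 \ldots a_k \leq_k b_1 \ldots b_k$ iff $a_1 < b_1$, or $a_1 = b_1$ and $a_2 \ldots a_k \leq_{k-1} b_2 \ldots b_k$. $\bot^\omega$ is the constant sequence $\bot\bot\ldots$; $\bigvee Lex_\omega(A)$ is the greatest element of $Lex_\omega(A)$ w.r.t. $\leq_\omega$; in the third case the result is the finite prefix followed by that infinite sequence. For $a,b\in Lex_\omega(A)$: $\gamma(a,b) = \min\{ i \mid a_i \ominus b_i \in C(A)\}$ and $\delta(a,b) = \min\{ i \mid (a_i \ominus b_i) \otimes b_i < a_i\}$, each equal to $\infty$ if the set is empty. *)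

(* Defs.v *)
(* Sequences over A are functions nat -> A, indexed from 0
   (the paper's a_1 a_2 ... is our a 0, a 1, ...). *)
From Stdlib Require Import Arith Lia ClassicalEpsilon.

Definition residuated_pomonoid_on {T : Type} (S : T -> Prop)
  (le : T -> T -> Prop) (mul : T -> T -> T) (res : T -> T -> T) (one : T) : Prop :=
  S one
  /\ (forall x y, S x -> S y -> S (mul x y))
  /\ (forall x y, S x -> S y -> S (res x y))
  /\ (forall x, S x -> le x x)
  /\ (forall x y, S x -> S y -> le x y -> le y x -> x = y)
  /\ (forall x y z, S x -> S y -> S z -> le x y -> le y z -> le x z)
  /\ (forall x y z, S x -> S y -> S z -> mul x (mul y z) = mul (mul x y) z)
  /\ (forall x y, S x -> S y -> mul x y = mul y x)
  /\ (forall x, S x -> mul one x = x)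
  /\ (forall a b c, S a -> S b -> S c -> (le (mul b c) a <-> le c (res a b))).

Definition residuated_pomonoid {T : Type}
  (le : T -> T -> Prop) (mul : T -> T -> T) (res : T -> T -> T) (one : T) : Prop :=
  residuated_pomonoid_on (fun _ => True) le mul res one.

Definition strict {T : Type} (le : T -> T -> Prop) (x y : T) : Prop :=
  le x y /\ x <> y.

(* I(A): cancellative elements *)
Definition cancellative {A : Type} (mul : A -> A -> A) (c : A) : Prop :=
  forall a b, mul a c = mul b c -> a = b.

(* Lex_omega(A) = I(A)^omega  U  I(A)^* A {bot}^omega *)
Definition in_Lex {A : Type} (mul : A -> A -> A) (bot : A) (a : nat -> A) : Prop :=
  (forall i, cancellative mul (a i))
  \/ exists k, (forall i, i < k -> cancellative mul (a i))
               /\ (forall i, k < i -> a i = bot).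

(* lexS n a b  <->  a_{<= n+1} <=_{n+1} b_{<= n+1} *)
Fixpoint lexS {A : Type} (le : A -> A -> Prop) (n : nat) (a b : nat -> A) : Prop :=
  match n with
  | 0 => le (a 0) (b 0)
  | S n' => strict le (a 0) (b 0)
            \/ (a 0 = b 0 /\ lexS le n' (fun i => a (S i)) (fun i => b (S i)))
  end.

Definition le_omega {A : Type} (le : A -> A -> Prop) (a b : nat -> A) : Prop :=
  forall n, lexS le n a b.

Definition mul_omega {A : Type} (mul : A -> A -> A) (a b : nat -> A) : nat -> A :=
  fun i => mul (a i) (b i).

Definition one_omega {A : Type} (one : A) : nat -> A := fun _ => one.

(* least index satisfying P, None standing for infinity *)
Definition least (P : nat -> Prop) : option nat :=
  match excluded_middle_informative (exists n, P n) with
  | left _ => Some (epsilon (inhabits 0) (fun n => P n /\ forall m, P m -> n <= m))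
  | right _ => None
  end.

Definition gamma {A : Type} (mul res : A -> A -> A) (a b : nat -> A) : option nat :=
  least (fun i => ~ cancellative mul (res (a i) (b i))).

Definition delta {A : Type} (le : A -> A -> Prop) (mul res : A -> A -> A)
  (a b : nat -> A) : option nat :=
  least (fun i => strict le (mul (res (a i) (b i)) (b i)) (a i)).

Definition is_greatest_Lex {A : Type} (le : A -> A -> Prop) (mul : A -> A -> A)
  (bot : A) (t : nat -> A) : Prop :=
  in_Lex mul bot t /\ forall a, in_Lex mul bot a -> le_omega le a t.

Definition top_Lex {A : Type} (le : A -> A -> Prop) (mul : A -> A -> A) (bot : A)
  : nat -> A :=
  epsilon (inhabits (fun _ => bot)) (is_greatest_Lex le mul bot).

Definition res_omega {A : Type} (le : A -> A -> Prop) (mul res : A -> A -> A)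
  (bot : A) (a b : nat -> A) : nat -> A :=
  match gamma mul res a b, delta le mul res a b with
  | None, None => fun i => res (a i) (b i)
  | Some g, None => fun i => if i <=? g then res (a i) (b i) else bot
  | Some g, Some d =>
      if g <=? d then (fun i => if i <=? g then res (a i) (b i) else bot)
      else (fun i => if i <=? d then res (a i) (b i)
                     else top_Lex le mul bot (i - S d))
  | None, Some d =>
      fun i => if i <=? d then res (a i) (b i) else top_Lex le mul bot (i - S d)
  end.

(* Main.v *)
Require Import Defs.
From Stdlib Require Import Arith Lia Setoid Classical ClassicalEpsilon FunctionalExtensionality.

Lemma min_ex (P : nat -> Prop) : (exists n, P n) -> exists n, P n /\ forall m, P m -> n <= m.
Proof.
  intros [n Hn]. revert Hn. induction n as [n IH] using (well_founded_induction lt_wf).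
  intros Hn. destruct (classic (exists m, m < n /\ P m)) as [[m [Hm HPm]]|Hno].
  - exact (IH m Hm HPm).
  - exists n. split; [exact Hn|]. intros m Hm. destruct (Nat.lt_ge_cases m n); [|lia].
    exfalso; apply Hno; eauto.
Qed.

Lemma least_Some P n : least P = Some n -> P n /\ forall m, P m -> n <= m.
Proof.
  unfold least. destruct (excluded_middle_informative _) as [e|ne]; intro H; [|discriminate].
  injection H as <-. apply epsilon_spec. apply min_ex. exact e.
Qed.

Lemma least_None P : least P = None -> forall n, ~ P n.
Proof.
  unfold least. destruct (excluded_middle_informative _) as [e|ne]; intro H; [discriminate|].
  intros n Hn; apply ne; eauto.
Qed.

Lemma lexS_char {A} (le : A -> A -> Prop) n : forall a b,
  lexS le n a b <-> (exists j, j < n /\ (forall i, i < j -> a i = b i) /\ strict le (a j) (b j))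
                   \/ ((forall i, i < n -> a i = b i) /\ le (a n) (b n)).
Proof.
  induction n as [|n IH]; intros a b; simpl.
  - split.
    + intros H; right; split; [intros; lia|exact H].
    + intros [[j [Hj _]]|[_ H]]; [lia|exact H].
  - rewrite IH. split.
    + intros [Hs|[H0 [[j [Hj [Hp Hs]]]|[Hp Hl]]]].
      * left; exists 0; split; [lia|split; [intros; lia|exact Hs]].
      * left; exists (S j); split; [lia|split; [|exact Hs]].
        intros [|i] Hi; [exact H0|apply Hp; lia].
      * right; split; [|exact Hl]. intros [|i] Hi; [exact H0|apply Hp; lia].
    + intros [[j [Hj [Hp Hs]]]|[Hp Hl]].
      * destruct j as [|j]; [left; exact Hs|].
        right; split; [apply Hp; lia|]. left; exists j; split; [lia|split; [intros i Hi; apply Hp; lia|exact Hs]].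
      * right; split; [apply Hp; lia|]. right; split; [intros i Hi; apply Hp; lia|exact Hl].
Qed.

Section Lex.
Variable A : Type.
Variable le : A -> A -> Prop.
Variables mul res : A -> A -> A.
Variables one bot : A.
Hypothesis Hrefl : forall x, le x x.
Hypothesis Hanti : forall x y, le x y -> le y x -> x = y.
Hypothesis Htrans : forall x y z, le x y -> le y z -> le x z.
Hypothesis Hassoc : forall x y z, mul x (mul y z) = mul (mul x y) z.
Hypothesis Hcomm : forall x y, mul x y = mul y x.
Hypothesis Hone : forall x, mul one x = x.
Hypothesis Hres : forall a b c, le (mul b c) a <-> le c (res a b).
Hypothesis Hbot : forall x, le bot x.

Local Notation canc := (cancellative mul).
Local Notation Lex := (in_Lex mul bot).
Local Notation T := (top_Lex le mul bot).
Local Notation RO a b := (res_omega le mul res bot a b).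

Definition LEx (a b : nat -> A) := (forall i, a i = b i) \/
  exists j, (forall i, i < j -> a i = b i) /\ strict le (a j) (b j).

Lemma mul_bot x : mul x bot = bot.
Proof. apply Hanti; [|apply Hbot]. apply Hres. apply Hbot. Qed.
Lemma mul_bot_l x : mul bot x = bot. Proof. rewrite Hcomm; apply mul_bot. Qed.
Lemma res_le a b : le (mul b (res a b)) a. Proof. apply Hres, Hrefl. Qed.
Lemma mul_mono b x y : le x y -> le (mul b x) (mul b y).
Proof. intros H. apply Hres. apply Htrans with y; [exact H|]. apply Hres, Hrefl. Qed.
Lemma canc_mul x y : canc x -> canc y -> canc (mul x y).
Proof. intros Hx Hy u v E. apply Hx, Hy. rewrite <- !Hassoc. exact E. Qed.
Lemma canc_one : canc one.
Proof. intros u v E. rewrite (Hcomm u), (Hcomm v), !Hone in E. exact E. Qed.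

Lemma Lex_tail a : Lex a -> forall j, ~ canc (a j) -> forall i, j < i -> a i = bot.
Proof.
  intros [Ha|[k [Hk1 Hk2]]] j Hj i Hi.
  - exfalso; apply Hj, Ha.
  - apply Hk2. destruct (Nat.lt_ge_cases j k) as [H|H]; [exfalso; apply Hj, Hk1, H|lia].
Qed.

Lemma first_diff (a b : nat -> A) : ~ (forall i, a i = b i) ->
  exists m, a m <> b m /\ forall i, i < m -> a i = b i.
Proof.
  intros H. apply not_all_ex_not in H. destruct (min_ex _ H) as [m [Hm Hmin]].
  exists m; split; [exact Hm|]. intros i Hi. apply NNPP; intros Hne. specialize (Hmin i Hne); lia.
Qed.

Lemma LEx_pointwise a b : (forall i, le (a i) (b i)) -> LEx a b.
Proof.
  intros H. destruct (classic (forall i, a i = b i)) as [E|E]; [left; exact E|].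
  destruct (first_diff _ _ E) as [m [Hm Hp]]. right; exists m; split; [exact Hp|split; [apply H|exact Hm]].
Qed.

Lemma LEx_botTail x y j : (forall i, i < j -> x i = y i) -> le (x j) (y j) ->
  (forall i, j < i -> x i = bot) -> LEx x y.
Proof.
  intros Hp Hl Ht. destruct (classic (forall i, x i = y i)) as [E|E]; [left; exact E|].
  destruct (first_diff _ _ E) as [m [Hm Hp']]. right; exists m; split; [exact Hp'|split; [|exact Hm]].
  destruct (lt_eq_lt_dec m j) as [[H|H]|H].
  - exfalso; apply Hm, Hp, H.
  - subst; exact Hl.
  - rewrite Ht by exact H. apply Hbot.
Qed.

Lemma le_omega_iff a b : le_omega le a b <-> LEx a b.
Proof.
  unfold le_omega. split.
  - intros H. destruct (classic (forall i, a i = b i)) as [E|E]; [left; exact E|].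
    destruct (first_diff _ _ E) as [m [Hm Hp]]. right; exists m; split; [exact Hp|].
    specialize (H (S m)). apply lexS_char in H.
    destruct H as [[j [Hj [Hp' Hs]]]|[Hp' _]].
    + destruct (Nat.lt_ge_cases j m) as [H|H].
      * exfalso; destruct Hs as [_ Hs]; apply Hs, Hp, H.
      * assert (j = m) by lia; subst; exact Hs.
    + exfalso; apply Hm, Hp'; lia.
  - intros [E|[j [Hp Hs]]] n; apply lexS_char.
    + right; split; [intros; apply E|rewrite E; apply Hrefl].
    + destruct (lt_eq_lt_dec n j) as [[H|H]|H].
      * right; split; [intros i Hi; apply Hp; lia|rewrite Hp by exact H; apply Hrefl].
      * subst; right; split; [exact Hp|apply (proj1 Hs)].
      * left; exists j; split; [exact H|split; [exact Hp|exact Hs]].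
Qed.

Lemma LEx_antisym a b : LEx a b -> LEx b a -> forall i, a i = b i.
Proof.
  intros [E|[j1 [P1 [L1 N1]]]] [E'|[j2 [P2 [L2 N2]]]].
  - exact E.
  - exact E.
  - intros i; symmetry; apply E'.
  - exfalso. destruct (lt_eq_lt_dec j1 j2) as [[H|H]|H].
    + apply N1; symmetry; apply P2, H.
    + subst; apply N1, Hanti; assumption.
    + apply N2; symmetry; apply P1, H.
Qed.

Lemma LEx_trans a b c : LEx a b -> LEx b c -> LEx a c.
Proof.
  intros [E|[j1 [P1 [L1 N1]]]] [E'|[j2 [P2 [L2 N2]]]].
  - left; intros i; rewrite E; apply E'.
  - right; exists j2; split; [intros i Hi; rewrite E; apply P2, Hi|rewrite E; split; assumption].
  - right; exists j1; split; [intros i Hi; rewrite <- E'; apply P1, Hi|rewrite <- E'; split; assumption].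
  - right; destruct (lt_eq_lt_dec j1 j2) as [[H|H]|H].
    + exists j1; split; [intros i Hi; rewrite P1 by exact Hi; apply P2; lia|].
      rewrite <- (P2 j1 H); split; assumption.
    + subst j2; exists j1; split; [intros i Hi; rewrite P1 by exact Hi; apply P2, Hi|].
      split; [eapply Htrans; eassumption|]. intros Eq. rewrite Eq in L1. apply N2, Hanti; assumption.
    + exists j2; split; [intros i Hi; rewrite P1 by lia; apply P2, Hi|].
      rewrite (P1 j2 H); split; assumption.
Qed.

Lemma Lex_mul a b : Lex a -> Lex b -> Lex (mul_omega mul a b).
Proof.
  unfold in_Lex, mul_omega.
  intros [Ha|[k1 [Ha1 Ha2]]] [Hb|[k2 [Hb1 Hb2]]].
  - left; intros i; apply canc_mul; auto.
  - right; exists k2; split; [intros i Hi; apply canc_mul; auto|intros i Hi; rewrite Hb2 by exact Hi; apply mul_bot].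
  - right; exists k1; split; [intros i Hi; apply canc_mul; auto|intros i Hi; rewrite Ha2 by exact Hi; apply mul_bot_l].
  - right; exists (Nat.min k1 k2); split.
    + intros i Hi; apply canc_mul; [apply Ha1|apply Hb1]; lia.
    + intros i Hi. destruct (Nat.lt_ge_cases k1 i) as [H|H].
      * rewrite Ha2 by exact H; apply mul_bot_l.
      * rewrite Hb2 by lia; apply mul_bot.
Qed.

Lemma top_spec : is_greatest_Lex le mul bot T.
Proof.
  unfold top_Lex. apply epsilon_spec.
  assert (Ht : forall x, le x (res bot bot)) by (intros x; apply Hres; rewrite mul_bot_l; apply Hrefl).
  destruct (classic (canc (res bot bot))) as [Hc|Hc].
  - exists (fun _ => res bot bot). split; [left; intros; exact Hc|].
    intros a _. apply le_omega_iff, LEx_pointwise. intros; apply Ht.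
  - exists (fun i => match i with 0 => res bot bot | S _ => bot end). split.
    + right; exists 0; split; [intros; lia|intros [|i] Hi; [lia|reflexivity]].
    + intros a Ha. apply le_omega_iff. destruct (classic (a 0 = res bot bot)) as [E|E].
      * left. intros [|i]; [exact E|]. apply (Lex_tail a Ha 0); [rewrite E; exact Hc|lia].
      * right; exists 0; split; [intros; lia|split; [apply Ht|exact E]].
Qed.

Lemma res_cases a b :
  ((forall i, RO a b i = res (a i) (b i)) /\ (forall i, canc (res (a i) (b i)))
     /\ (forall i, mul (b i) (res (a i) (b i)) = a i))
  \/ (exists g, (forall i, i <= g -> RO a b i = res (a i) (b i)) /\ (forall i, g < i -> RO a b i = bot)
        /\ ~ canc (res (a g) (b g)) /\ (forall i, i < g -> canc (res (a i) (b i)))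
        /\ (forall i, i < g -> mul (b i) (res (a i) (b i)) = a i))
  \/ (exists d, (forall i, i <= d -> RO a b i = res (a i) (b i)) /\ (forall i, RO a b (i + S d) = T i)
        /\ (forall i, i <= d -> canc (res (a i) (b i)))
        /\ (forall i, i < d -> mul (b i) (res (a i) (b i)) = a i)
        /\ strict le (mul (b d) (res (a d) (b d))) (a d)).
Proof.
  unfold res_omega.
  assert (Heq : forall i, ~ strict le (mul (res (a i) (b i)) (b i)) (a i) ->
     mul (b i) (res (a i) (b i)) = a i).
  { intros i Hn. apply NNPP; intros Hne. apply Hn. rewrite Hcomm. split; [apply res_le|exact Hne]. }
  destruct (gamma mul res a b) as [g|] eqn:Eg; destruct (delta le mul res a b) as [d|] eqn:Ed;
  unfold gamma in Eg; unfold delta in Ed.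
  - apply least_Some in Eg as [Gg Gmin]. apply least_Some in Ed as [Dd Dmin].
    cbv beta in Gg, Gmin, Dd, Dmin.
    destruct (g <=? d) eqn:Egd; [apply Nat.leb_le in Egd|apply Nat.leb_gt in Egd].
    + right; left. exists g. split; [|split; [|split; [exact Gg|split]]].
      * intros i Hi. rewrite (proj2 (Nat.leb_le i g) Hi). reflexivity.
      * intros i Hi. rewrite (proj2 (Nat.leb_gt i g) Hi). reflexivity.
      * intros i Hi. apply NNPP; intros Hn; specialize (Gmin i Hn); lia.
      * intros i Hi. apply Heq. intros Hs; specialize (Dmin i Hs); lia.
    + right; right. exists d. split; [|split; [|split; [|split]]].
      * intros i Hi. rewrite (proj2 (Nat.leb_le i d) Hi). reflexivity.
      * intros i. rewrite (proj2 (Nat.leb_gt (i + S d) d) ltac:(lia)). rewrite Nat.add_sub. reflexivity.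
      * intros i Hi. apply NNPP; intros Hn; specialize (Gmin i Hn); lia.
      * intros i Hi. apply Heq. intros Hs; specialize (Dmin i Hs); lia.
      * rewrite Hcomm. exact Dd.
  - apply least_Some in Eg as [Gg Gmin]. pose proof (least_None _ Ed) as Dn.
    cbv beta in Gg, Gmin, Dn.
    right; left. exists g. split; [|split; [|split; [exact Gg|split]]].
    * intros i Hi. rewrite (proj2 (Nat.leb_le i g) Hi). reflexivity.
    * intros i Hi. rewrite (proj2 (Nat.leb_gt i g) Hi). reflexivity.
    * intros i Hi. apply NNPP; intros Hn; specialize (Gmin i Hn); lia.
    * intros i Hi. apply Heq, Dn.
  - apply least_Some in Ed as [Dd Dmin]. pose proof (least_None _ Eg) as Gn.
    cbv beta in Gn, Dd, Dmin.
    right; right. exists d. split; [|split; [|split; [|split]]].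
    * intros i Hi. rewrite (proj2 (Nat.leb_le i d) Hi). reflexivity.
    * intros i. rewrite (proj2 (Nat.leb_gt (i + S d) d) ltac:(lia)). rewrite Nat.add_sub. reflexivity.
    * intros i Hi. apply NNPP, Gn.
    * intros i Hi. apply Heq. intros Hs; specialize (Dmin i Hs); lia.
    * rewrite Hcomm. exact Dd.
  - pose proof (least_None _ Eg) as Gn. pose proof (least_None _ Ed) as Dn.
    cbv beta in Gn, Dn.
    left. split; [reflexivity|split].
    * intros i. apply NNPP, Gn.
    * intros i. apply Heq, Dn.
Qed.

Lemma G1 a b c j :
  Lex b ->
  (forall i, i < j -> mul (b i) (res (a i) (b i)) = a i) ->
  (forall i, i < j -> c i = res (a i) (b i)) ->
  le (c j) (res (a j) (b j)) ->
  (c j = res (a j) (b j) -> mul (b j) (res (a j) (b j)) <> a j) ->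
  LEx (mul_omega mul b c) a.
Proof.
  intros Hb Hba Hc Hl Hn. unfold mul_omega.
  assert (Hp : forall i, i < j -> mul (b i) (c i) = a i) by (intros i Hi; rewrite Hc by exact Hi; apply Hba, Hi).
  assert (Hlj : le (mul (b j) (c j)) (a j)) by (apply Hres, Hl).
  destruct (classic (canc (b j))) as [Hcb|Hcb].
  - right; exists j; split; [exact Hp|split; [exact Hlj|]].
    intros E. assert (E2 : mul (b j) (c j) = mul (b j) (res (a j) (b j))).
    { apply Hanti; [apply mul_mono, Hl|rewrite E; apply res_le]. }
    assert (E3 : c j = res (a j) (b j)). { apply Hcb. rewrite (Hcomm (c j)), (Hcomm (res _ _)). exact E2. }
    apply (Hn E3). rewrite <- E3. exact E.
  - apply LEx_botTail with j; [exact Hp|exact Hlj|].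
    intros i Hi. rewrite (Lex_tail b Hb j Hcb i Hi). apply mul_bot_l.
Qed.

Lemma G2 a b c m :
  LEx (mul_omega mul b c) a ->
  (forall i, i < m -> c i = res (a i) (b i)) ->
  (forall i, i < m -> mul (b i) (res (a i) (b i)) = a i) ->
  le (c m) (res (a m) (b m)).
Proof.
  unfold mul_omega. intros HL Hc Hba; cbv beta in HL. apply Hres.
  destruct HL as [E|[j [Hp [Hl Hn]]]].
  - rewrite E; apply Hrefl.
  - destruct (lt_eq_lt_dec m j) as [[H|H]|H].
    + rewrite Hp by exact H; apply Hrefl.
    + subst; exact Hl.
    + exfalso; apply Hn. rewrite Hc by exact H. apply Hba, H.
Qed.

Lemma Lex_res a b : Lex (RO a b).
Proof.
  destruct (res_cases a b) as [[R1 [R2 _]]|[[g [R1 [R2 [_ [R4 _]]]]]|[d [R1 [R2 [R3 _]]]]]].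
  - left; intros i; rewrite R1; apply R2.
  - right; exists g; split.
    + intros i Hi; rewrite R1 by lia; apply R4, Hi.
    + exact R2.
  - destruct (proj1 top_spec) as [HT|[k [HT1 HT2]]].
    + left; intros i. destruct (Nat.le_gt_cases i d) as [H|H].
      * rewrite R1 by exact H; apply R3, H.
      * replace i with ((i - S d) + S d) by lia. rewrite R2. apply HT.
    + right; exists (k + S d); split.
      * intros i Hi. destruct (Nat.le_gt_cases i d) as [H|H].
        -- rewrite R1 by exact H; apply R3, H.
        -- replace i with ((i - S d) + S d) by lia. rewrite R2. apply HT1; lia.
      * intros i Hi. replace i with ((i - S d) + S d) by lia. rewrite R2. apply HT2; lia.
Qed.

Lemma Lex_resid a b c : Lex a -> Lex b -> Lex c ->
  (le_omega le (mul_omega mul b c) a <-> le_omega le c (RO a b)).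
Proof.
  intros Ha Hb Hc. rewrite !le_omega_iff.
  destruct (res_cases a b) as [[R1 [R2 R3]]|[[g [R1 [R2 [R3 [R4 R5]]]]]|[d [R1 [R2 [R3 [R4 R5]]]]]]]; split.
  - intros HL. destruct (classic (forall i, c i = RO a b i)) as [E|E]; [left; exact E|].
    destruct (first_diff _ _ E) as [m [Hm Hp]]. right; exists m; split; [exact Hp|split; [|exact Hm]].
    rewrite R1. apply (G2 a b c m HL); [intros i Hi; rewrite Hp by exact Hi; apply R1|intros; apply R3].
  - intros [E|[j [Hp [Hl Hn]]]].
    + left. intros i. unfold mul_omega. rewrite E, R1. apply R3.
    + rewrite R1 in Hl, Hn. apply (G1 a b c j Hb).
      * intros; apply R3.
      * intros i Hi; rewrite Hp by exact Hi; apply R1.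
      * exact Hl.
      * intros E; exfalso; exact (Hn E).
  - intros HL. destruct (classic (forall i, c i = RO a b i)) as [E|E]; [left; exact E|].
    destruct (first_diff _ _ E) as [m [Hm Hp]]. right; exists m; split; [exact Hp|split; [|exact Hm]].
    destruct (Nat.le_gt_cases m g) as [H|H].
    + rewrite R1 by exact H. apply (G2 a b c m HL).
      * intros i Hi; rewrite Hp by exact Hi; apply R1; lia.
      * intros i Hi; apply R5; lia.
    + exfalso. apply Hm. rewrite R2 by exact H.
      apply (Lex_tail c Hc g); [|exact H]. rewrite Hp by exact H. rewrite R1 by lia. exact R3.
  - intros [E|[j [Hp [Hl Hn]]]].
    + apply LEx_botTail with g.
      * intros i Hi. unfold mul_omega. rewrite E, R1 by lia. apply R5, Hi.
      * unfold mul_omega. rewrite E, R1 by lia. apply res_le.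
      * intros i Hi. unfold mul_omega. rewrite E, R2 by exact Hi. apply mul_bot.
    + destruct (Nat.le_gt_cases j g) as [H|H].
      * rewrite R1 in Hl, Hn by exact H. apply (G1 a b c j Hb).
        -- intros i Hi; apply R5; lia.
        -- intros i Hi; rewrite Hp by exact Hi; apply R1; lia.
        -- exact Hl.
        -- intros E; exfalso; exact (Hn E).
      * exfalso. rewrite R2 in Hl, Hn by exact H. apply Hn, Hanti; [exact Hl|apply Hbot].
  - intros HL. destruct (classic (forall i, c i = RO a b i)) as [E|E]; [left; exact E|].
    destruct (first_diff _ _ E) as [m [Hm Hp]].
    destruct (Nat.le_gt_cases m d) as [H|H].
    + right; exists m; split; [exact Hp|split; [|exact Hm]].
      rewrite R1 by exact H. apply (G2 a b c m HL).
      * intros i Hi; rewrite Hp by exact Hi; apply R1; lia.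
      * intros i Hi; apply R4; lia.
    + assert (Hct : Lex (fun i => c (i + S d))).
      { destruct Hc as [Hc|[k [Hk1 Hk2]]]; [left; intros i; apply Hc|].
        right; exists (k - S d); split; intros i Hi; [apply Hk1|apply Hk2]; lia. }
      pose proof (proj2 top_spec _ Hct) as HT. apply le_omega_iff in HT.
      destruct HT as [ET|[j [Hpj [Hlj Hnj]]]].
      * exfalso. apply E. intros i. destruct (Nat.le_gt_cases i d) as [Hi|Hi].
        -- apply Hp; lia.
        -- replace i with (i - S d + S d) by lia. rewrite R2. apply ET.
      * right; exists (j + S d). split.
        -- intros i Hi. destruct (Nat.le_gt_cases i d) as [Hi'|Hi'].
           ++ apply Hp; lia.
           ++ replace i with (i - S d + S d) by lia. rewrite R2. apply Hpj; lia.
        -- rewrite R2. exact (conj Hlj Hnj).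
  - intros [E|[j [Hp [Hl Hn]]]].
    + apply (G1 a b c d Hb).
      * exact R4.
      * intros i Hi; rewrite E; apply R1; lia.
      * rewrite E, R1 by lia. apply Hrefl.
      * intros _ Eq. exact (proj2 R5 Eq).
    + destruct (Nat.le_gt_cases j d) as [H|H].
      * rewrite R1 in Hl, Hn by exact H. apply (G1 a b c j Hb).
        -- intros i Hi; apply R4; lia.
        -- intros i Hi; rewrite Hp by exact Hi; apply R1; lia.
        -- exact Hl.
        -- intros Eq; exfalso; exact (Hn Eq).
      * apply (G1 a b c d Hb).
        -- exact R4.
        -- intros i Hi; rewrite Hp by lia; apply R1; lia.
        -- rewrite Hp by lia. rewrite R1 by lia. apply Hrefl.
        -- intros _ Eq. exact (proj2 R5 Eq).
Qed.

Theorem main_sec : residuated_pomonoid_on Lex (le_omega le) (mul_omega mul)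
    (res_omega le mul res bot) (one_omega one).
Proof.
  unfold residuated_pomonoid_on.
  split; [left; intros; exact canc_one|].
  split; [intros; apply Lex_mul; assumption|].
  split; [intros; apply Lex_res|].
  split; [intros; apply le_omega_iff; left; reflexivity|].
  split; [intros x y _ _ H1 H2; apply functional_extensionality;
          apply LEx_antisym; apply le_omega_iff; assumption|].
  split; [intros x y z _ _ _ H1 H2; apply le_omega_iff;
          apply LEx_trans with y; apply le_omega_iff; assumption|].
  split; [intros; apply functional_extensionality; intros; unfold mul_omega; apply Hassoc|].
  split; [intros; apply functional_extensionality; intros; unfold mul_omega; apply Hcomm|].
  split; [intros; apply functional_extensionality; intros; unfold mul_omega, one_omega; apply Hone|].
  intros; apply Lex_resid; assumption.
Qed.

End Lex.

Theorem proposition7 (A : Type) (le : A -> A -> Prop) (mul res : A -> A -> A)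
  (one bot : A) :
  residuated_pomonoid le mul res one ->
  (forall x, le bot x) ->
  residuated_pomonoid_on (in_Lex mul bot) (le_omega le) (mul_omega mul)
    (res_omega le mul res bot) (one_omega one).
Proof.
  intros H Hbot.
  destruct H as (H1 & H2 & H3 & H4 & H5 & H6 & H7 & H8 & H9 & H10).
  apply main_sec.
  - intros x; apply H4; exact I.
  - intros x y; apply H5; exact I.
  - intros x y z; apply H6; exact I.
  - intros x y z; apply H7; exact I.
  - intros x y; apply H8; exact I.
  - intros x; apply H9; exact I.
  - intros a b c; apply H10; exact I.
  - exact Hbot.
Qed.
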